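(* Consider the $n$-order passive filter, for $i=1,\dots,m$, \[ \begin{cases} x_{i}^{(n-1)} = -\sum_{k=1}^{n-1}\gamma_{ik}x_{i}^{(n-k-1)}+\gamma_{in}(b_{i}-\hat{b}_{i}),\\ \dot{\hat{b}}_{i} = -S(\omega_{m}-\hat{\eta})\hat{b}_{i}+w_{i},\\ \dot{\hat{\eta}} = -\Gamma_{p}\sum_{i=1}^{m}S(b_{i})\hat{b}_{i}, \end{cases} \qquad w_{i}=B_{pi}^{T}P_{pi}X_{i}, \] under the assumptions that at least two of the measured vectors $b_i$ are non-collinear, and that the gyro bias $\eta$ is bounded and constant ($\dot\eta=0$) and the measured angular velocity $\omega_m(\cdot)$ (hence $\omega(\cdot)$) is bounded. Then the errors $\tilde{b}_{i}=b_{i}-\hat{b}_{i}$, $i=1,\dots,m$, and $\tilde{\eta}=\eta-\hat{\eta}$ converge globally asymptotically to zero.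
   Context: A rigid body has attitude $R\in SO(3)$ with $\dot R=RS(\omega)$, where $\omega$ is the body angular velocity and $S(x)$ is the skew-symmetric matrix with $S(x)y=x\times y$. Given constant inertial vectors $r_i$, $i=1,\dots,m$, the body-frame measurements are $b_i=R^Tr_i$, so $\dot b_i=-S(\omega)b_i$. The rate gyro measures $\omega_m=\omega+\eta$ with unknown bias $\eta$, giving $\dot b_i=-S(\omega_m-\eta)b_i$, $\dot\eta=0$. For each $i$, $\Upsilon_i=(\gamma_{i1},\dots,\gamma_{in})\in\mathbb{R}^n$ is chosen so that both $s^n+\sum_{k=1}^n\gamma_{ik}s^{n-k}$ and $s^{n-1}+\sum_{k=1}^{n-1}\gamma_{ik}s^{n-1-k}$ are Hurwitz (such choices exist, e.g. $\gamma_{ik}=\binom{n}{k}\alpha^k$, $\alpha>0$); $x_i^{(j)}$ denotes the $j$-th time derivative of $x_i\in\mathbb{R}^3$. Set $X_i=[x_i^T,\dot x_i^T,\dots,x_i^{(n-2)T}]^T\in\mathbb{R}^{3(n-1)}$, $A_{pi}=A_{\pi(\Upsilon_i)}\otimes I_3$ where $A_{\pi(\Upsilon_i)}$ is the $(n-1)\times(n-1)$ companion matrix of $(\gamma_{i1},\dots,\gamma_{i,n-1})$ (ones on the superdiagonal, last row $(-\gamma_{i,n-1},\dots,-\gamma_{i1})$), $B_{pi}=\gamma_{in}e_{n-1}\otimes I_3$ with $e_{n-1}=(0,\dots,0,1)^T\in\mathbb{R}^{n-1}$, and $P_{pi}$ the symmetric positive definite solution of $A_{pi}^TP_{pi}+P_{pi}A_{pi}=-Q_{pi}$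 for a given symmetric positive definite $Q_{pi}$. $\Gamma_p$ is a positive definite diagonal gain matrix. *)

(* Defs.v *)
From mathcomp Require Import all_boot all_order all_algebra.
From mathcomp Require Import all_classical all_reals all_analysis.
From mathcomp Require Import complex.
Set Implicit Arguments. Unset Strict Implicit. Unset Printing Implicit Defensive.
Import Order.TTheory GRing.Theory Num.Theory.
Import numFieldNormedType.Exports.
Local Open Scope ring_scope.

Section Defs.
Variable R : realType.

(* S(x): skewS-symmetric matrix with S(x) y = x \times y. *)
Definition skewS (x : 'cV[R]_3) : 'M[R]_3 :=
  let x0 := x (inord 0) 0 in let x1 := x (inord 1) 0 in let x2 := x (inord 2) 0 in
  \matrix_(i < 3, j < 3)
    nth 0 (nth [::] [:: [:: 0; - x2; x1];
                       [:: x2; 0; - x0];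
                       [:: - x1; x0; 0]] i) j.

(* Index decomposition 'I_(m*n) -> 'I_m * 'I_n with  (i, j) <-> i * n + j
   (the inverse of mathcomp's mxvec_index). *)
Definition kron_idx (m n : nat) (r : 'I_(m * n)) : 'I_m * 'I_n :=
  enum_val (cast_ord (esym (mxvec_cast m n)) r).

Definition kron (m1 n1 m2 n2 : nat) (A : 'M[R]_(m1, n1)) (B : 'M[R]_(m2, n2))
  : 'M[R]_(m1 * m2, n1 * n2) :=
  \matrix_(r, c) (A (kron_idx r).1 (kron_idx c).1 * B (kron_idx r).2 (kron_idx c).2).

Definition companion (p : nat) (g : nat -> R) : 'M[R]_p :=
  \matrix_(i < p, j < p)
    ((if j == i.+1 :> nat then 1 else 0)
     + (if i == p.-1 :> nat then - g (p - j)%N else 0)).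

Definition elast (p : nat) : 'cV[R]_p :=
  \col_(i < p) (if i == p.-1 :> nat then 1 else 0).

Definition charpoly_of (d : nat) (g : nat -> R) : {poly R} :=
  'X^d + \sum_(1 <= k < d.+1) (g k)%:P * 'X^(d - k).

Definition hurwitz (p : {poly R}) : Prop :=
  forall z : R[i], root (map_poly (fun x : R => x%:C%C) p) z -> complex.Re z < 0.

Definition sym_posdef (k : nat) (P : 'M[R]_k) : Prop :=
  P^T = P /\ forall v : 'cV[R]_k, v != 0 -> 0 < (v^T *m P *m v) 0 0.

Definition posdef_diag (k : nat) (G : 'M[R]_k) : Prop :=
  exists d : 'rV[R]_k, (forall i, 0 < d 0 i) /\ G = diag_mx d.

Definition in_SO3 (Q : 'M[R]_3) : Prop := Q^T *m Q = 1%:M /\ \det Q = 1.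

End Defs.

Section Filter.
Variable R : realType.
Definition Ap (n : nat) (g : nat -> R) : 'M[R]_(n.-1 * 3) :=
  kron (companion n.-1 g) (1%:M : 'M[R]_3).
Definition Bp (n : nat) (g : nat -> R) : 'M[R]_(n.-1 * 3, 3) :=
  g n *: kron (elast R n.-1) (1%:M : 'M[R]_3).
End Filter.

(* Main.v *)
Require Import Defs.
From mathcomp Require Import all_boot all_order all_algebra.
From mathcomp Require Import all_classical all_reals all_analysis.
From mathcomp Require Import complex.
From mathcomp Require Import ring lra zify.
Set Implicit Arguments. Unset Strict Implicit. Unset Printing Implicit Defensive.
Import Order.TTheory GRing.Theory Num.Theory Num.Def.
Import numFieldNormedType.Exports.
Local Open Scope ring_scope.
Local Open Scope classical_set_scope.

Section Scal.
Context {R : realType}.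
Definition Bnd (f : R -> R) := exists M, forall t, 1 <= t -> `|f t| <= M.
Definition Z0 (f : R -> R) := forall e, 0 < e -> exists A, forall t, A <= t -> `|f t| <= e.

Lemma Bnd_cst c : Bnd (fun _ => c).
Proof. by exists `|c|. Qed.

Lemma Bnd_add f g : Bnd f -> Bnd g -> Bnd (fun t => f t + g t).
Proof.
move=> [M1 h1] [M2 h2]; exists (M1 + M2) => t t1.
by rewrite (le_trans (ler_normD _ _)) // lerD ?h1 ?h2.
Qed.

Lemma Bnd_mul f g : Bnd f -> Bnd g -> Bnd (fun t => f t * g t).
Proof.
move=> [M1 h1] [M2 h2]; exists (M1 * M2) => t t1.
by rewrite normrM ler_pM // ?h1 ?h2.
Qed.

Lemma Bnd_opp f : Bnd f -> Bnd (fun t => - f t).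
Proof. by move=> [M h]; exists M => t t1; rewrite normrN h. Qed.

Lemma Bnd_ext f g : (forall t, 1 <= t -> f t = g t) -> Bnd f -> Bnd g.
Proof. by move=> e [M h]; exists M => t t1; rewrite -e // h. Qed.

Lemma Bnd_sum (I : Type) (s : seq I) (F : I -> R -> R) :
  (forall i, Bnd (F i)) -> Bnd (fun t => \sum_(i <- s) F i t).
Proof.
move=> h; elim: s => [|a s IH].
  by apply: (Bnd_ext _ (Bnd_cst 0)) => t _; rewrite big_nil.
apply: (Bnd_ext _ (Bnd_add (h a) IH)) => t _; by rewrite big_cons.
Qed.

Lemma Z0_ext f g : (forall t, 1 <= t -> f t = g t) -> Z0 f -> Z0 g.
Proof.
move=> e h eps eps0; have [A hA] := h eps eps0; exists (maxr A 1) => t.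
by rewrite ge_max => /andP[tA t1]; rewrite -e // hA.
Qed.

Lemma Z0_le f g : (forall t, 1 <= t -> `|f t| <= g t) -> Z0 g -> Z0 f.
Proof.
move=> e h eps eps0; have [A hA] := h eps eps0; exists (maxr A 1) => t.
rewrite ge_max => /andP[tA t1]; apply: le_trans (e t t1) _.
exact: le_trans (ler_norm _) (hA t tA).
Qed.

Lemma Z0_cst0 : Z0 (fun _ => 0).
Proof. by move=> e e0; exists 0 => t _; rewrite normr0 ltW. Qed.

Lemma Z0_add f g : Z0 f -> Z0 g -> Z0 (fun t => f t + g t).
Proof.
move=> hf hg e e0; have e20 : 0 < e / 2 by rewrite divr_gt0.
have [A1 h1] := hf _ e20; have [A2 h2] := hg _ e20.
exists (maxr A1 A2) => t; rewrite ge_max => /andP[t1 t2].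
rewrite (le_trans (ler_normD _ _)) // (splitr e) lerD ?h1 ?h2 //.
Qed.

Lemma Z0_opp f : Z0 f -> Z0 (fun t => - f t).
Proof. by move=> h e e0; have [A hA] := h e e0; exists A => t tA; rewrite normrN hA. Qed.

Lemma Z0_mull f g : Bnd f -> Z0 g -> Z0 (fun t => f t * g t).
Proof.
move=> [M hM] hg e e0.
have M1 : 0 < `|M| + 1 by rewrite ltr_wpDl.
have [A hA] := hg (e / (`|M| + 1)) (divr_gt0 e0 M1).
exists (maxr A 1) => t; rewrite ge_max => /andP[tA t1].
rewrite normrM (le_trans (ler_pM _ _ (hM t t1) (hA t tA))) //.
have HM : M <= `|M| + 1 by rewrite (le_trans (ler_norm M)) // lerDl.
apply: le_trans (ler_wpM2r (ltW (divr_gt0 e0 M1)) HM) _.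
by rewrite mulrC divfK ?gt_eqF.
Qed.

Lemma Z0_mulr f g : Z0 f -> Bnd g -> Z0 (fun t => f t * g t).
Proof. by move=> h1 h2; apply: (Z0_ext _ (Z0_mull h2 h1)) => t _; rewrite mulrC. Qed.

Lemma Z0_sum (I : Type) (s : seq I) (F : I -> R -> R) :
  (forall i, Z0 (F i)) -> Z0 (fun t => \sum_(i <- s) F i t).
Proof.
move=> h; elim: s => [|a s IH].
  by apply: (Z0_ext _ Z0_cst0) => t _; rewrite big_nil.
apply: (Z0_ext _ (Z0_add (h a) IH)) => t _; by rewrite big_cons.
Qed.


Lemma Z0_cvg f : Z0 f -> f t @[t --> +oo] --> (0 : R).
Proof.
move=> h; apply/cvgrPdist_le => e e0; have [A hA] := h e e0.
near=> t; rewrite sub0r normrN; apply: hA.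
near: t; apply: nbhs_pinfty_ge; exact: num_real.
Unshelve. all: by end_near. Qed.


Definition Cauchy (f : R -> R) :=
  forall e, 0 < e -> exists A, forall s t, A <= s -> A <= t -> `|f s - f t| <= e.

Lemma Z0_Cauchy f : Z0 f -> Cauchy f.
Proof.
move=> h e e0; have [A hA] := h (e / 2) (divr_gt0 e0 (ltr0n _ 2)).
exists A => s t sA tA; rewrite (le_trans (ler_normB _ _)) // (splitr e) lerD ?hA //.
Qed.

Lemma mvt0 (f df : R -> R) (a b : R) : 0 < a -> a <= b ->
  (forall t : R, 0 < t -> is_derive t 1 f (df t)) ->
  exists2 c, a <= c <= b & f b - f a = df c * (b - a).
Proof.
move=> a0 ab hd.
have hd' : forall x, x \in `]a, b[%R -> is_derive x 1 f (df x).
  move=> x; rewrite in_itv /= => /andP[ax _]; apply: hd; exact: lt_trans ax.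
have cf : {within `[a, b], continuous f}.
  apply: derivable_within_continuous => x; rewrite in_itv /= => /andP[ax _].
  have := hd x (lt_le_trans a0 ax); by case.
have [c] := MVT_segment ab hd' cf.
by rewrite in_itv /= => cab ->; exists c.
Qed.

Lemma lip_of_der (f df : R -> R) K :
  (forall t : R, 0 < t -> is_derive t 1 f (df t)) -> (forall t, 1 <= t -> `|df t| <= K) ->
  forall s t, 1 <= s -> 1 <= t -> `|f s - f t| <= K * `|s - t|.
Proof.
move=> hd hK.
suff H : forall s t, 1 <= s -> s <= t -> `|f s - f t| <= K * `|s - t|.
  move=> s t s1 t1; case: (leP s t) => st; first exact: H.
  by rewrite distrC [`|s - t|]distrC H // ltW.
move=> s t s1 st; have s0 : 0 < s by exact: lt_le_trans ltr01 s1.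
have [c /andP[sc ct] E] := mvt0 s0 st hd.
rewrite distrC E normrM [`|s - t|]distrC ler_wpM2r //.
by apply: hK; exact: le_trans s1 sc.
Qed.

Lemma barbalat (f df h u : R -> R) L :
  (forall t : R, 0 < t -> is_derive t 1 f (df t)) ->
  (forall t, 1 <= t -> df t = h t + u t) ->
  Cauchy f -> Z0 u ->
  (forall s t, 1 <= s -> 1 <= t -> `|h s - h t| <= L * `|s - t|) -> Z0 h.
Proof.
move=> hd hsplit hC hu hL e e0.
set K := `|L| + 1.
have K0 : 0 < K by rewrite ltr_wpDl.
set d := e / (2 * K).
have d0 : 0 < d by rewrite divr_gt0 // mulr_gt0.
have [A1 hA1] := hu (e / 4) (divr_gt0 e0 (ltr0n _ 4)).
have [A2 hA2] := hC (e * d / 8) (divr_gt0 (mulr_gt0 e0 d0) (ltr0n _ 8)).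
exists (maxr 1 (maxr A1 A2)) => t; rewrite !ge_max => /and3P[t1 tA1 tA2].
have t0 : 0 < t by exact: lt_le_trans ltr01 t1.
have tdt : t <= t + d by rewrite lerDl ltW.
have [c /andP[tc ctd] E] := mvt0 t0 tdt hd.
have c1 : 1 <= c by exact: le_trans t1 tc.
have H1 : `|f (t + d) - f t| <= e * d / 8.
  by apply: hA2 => //; apply: le_trans tA2 _.
rewrite E addrAC subrr add0r normrM (gtr0_norm d0) in H1.
have Hdf : `|df c| <= e / 8.
  by rewrite -(ler_pM2r d0) (le_trans H1) // mulrAC.
have Huc : `|u c| <= e / 4 by apply: hA1; exact: le_trans tA1 tc.
have Hh : `|h t - h c| <= K * d.
  apply: le_trans (hL t c t1 c1) _.
  have tc' : `|t - c| <= d by rewrite distrC ger0_norm ?subr_ge0 //; lra.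
  apply: le_trans (ler_wpM2l (ltW K0) tc').
  rewrite ler_wpM2r // (le_trans (ler_norm L)) // lerDl //.
have Kd : K * d = e / 2 by rewrite /d; field; rewrite gt_eqF.
have hc : h c = df c - u c by rewrite hsplit // addrK.
have H2 : `|h c| <= `|df c| + `|u c| by rewrite hc ler_normB.
have H3 : `|h t| <= `|h t - h c| + `|h c|.
  by rewrite (le_trans _ (ler_normD _ _)) // subrK.
rewrite Kd in Hh; lra.
Qed.

Lemma Cauchy_nincr (V : R -> R) :
  (forall s t, 1 <= s -> s <= t -> V t <= V s) -> (forall t, 1 <= t -> 0 <= V t) -> Cauchy V.
Proof.
move=> hm h0 e e0.
set E := V @` [set t | 1 <= t].
have hE : has_inf E.
  split; first by exists (V 1); rewrite /E; exists 1 => //=.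
  by exists 0 => _ [t t1 <-]; apply: h0.
have [_ [t0 t01 <-] Ht0] := inf_adherent e0 hE.
have lb := ge_inf hE.2.
exists t0 => s t s0 t0'.
have Vs : inf E <= V s by apply: lb; rewrite /E; exists s => //=; exact: le_trans t01 s0.
have Vt : inf E <= V t by apply: lb; rewrite /E; exists t => //=; exact: le_trans t01 t0'.
have := hm t0 s t01 s0; have := hm t0 t t01 t0'.
move=> h1 h2; rewrite ler_norml; apply/andP; split; lra.
Qed.

End Scal.

Section Der.
Context {R : realType}.

Lemma is_derive_ext (W : normedModType R) (f g : R -> W) (t : R) (df : W) :
  (forall x, f x = g x) -> is_derive t 1 f df -> is_derive t 1 g df.
Proof. by move=> e; have -> : g = f by apply/funext => x; rewrite e. Qed.

Lemma derD (W : normedModType R) (f g : R -> W) (t : R) df dg :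
  is_derive t 1 f df -> is_derive t 1 g dg ->
  is_derive t 1 (fun x => f x + g x) (df + dg).
Proof. by move=> h1 h2; have := is_deriveD h1 h2. Qed.

Lemma derN (W : normedModType R) (f : R -> W) (t : R) df :
  is_derive t 1 f df -> is_derive t 1 (fun x => - f x) (- df).
Proof. by move=> h1; have := is_deriveN h1. Qed.

Lemma derB (W : normedModType R) (f g : R -> W) (t : R) df dg :
  is_derive t 1 f df -> is_derive t 1 g dg ->
  is_derive t 1 (fun x => f x - g x) (df - dg).
Proof. by move=> h1 h2; apply: derD => //; apply: derN. Qed.

Lemma derC (W : normedModType R) (c : W) (t : R) :
  is_derive t 1 (fun _ => c) 0.
Proof. exact: is_derive_cst. Qed.

Lemma derM (f g : R -> R) (t : R) df dg :
  is_derive t 1 f df -> is_derive t 1 g dg ->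
  is_derive t 1 (fun x => f x * g x) (df * g t + f t * dg).
Proof.
move=> h1 h2; apply: (is_derive_eq (is_deriveM h1 h2)).
by rewrite addrC [df * _]mulrC.
Qed.

Lemma der_sum (W : normedModType R) (I : Type) (s : seq I) (F : I -> R -> W) (dF : I -> W) (t : R) :
  (forall i, is_derive t 1 (F i) (dF i)) ->
  is_derive t 1 (fun x => \sum_(i <- s) F i x) (\sum_(i <- s) dF i).
Proof.
move=> h; elim: s => [|a s IH].
  rewrite big_nil; apply: (is_derive_ext _ (derC 0 t)) => x; by rewrite big_nil.
rewrite big_cons; apply: (is_derive_ext _ (derD (h a) IH)) => x; by rewrite big_cons.
Qed.

Lemma der_entry p q (M : R -> 'M[R]_(p, q)) (t : R) (D : 'M[R]_(p, q)) i j :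
  is_derive t 1 M D -> is_derive t 1 (fun x => M x i j) (D i j).
Proof.
move=> hM; have dM : derivable M t 1 by case: hM.
have := derive_mx dM; rewrite derive_val => ->; rewrite mxE.
apply: derivableP; exact: ((derivable_mxP M t 1).1 dM i j).
Qed.

Lemma der_entries p q (M : R -> 'M[R]_(p, q)) (t : R) (D : 'M[R]_(p, q)) :
  (forall i j, is_derive t 1 (fun x => M x i j) (D i j)) -> is_derive t 1 M D.
Proof.
move=> h; have dM : derivable M t 1.
  by apply/derivable_mxP => i j; case: (h i j).
apply: DeriveDef; first by []. rewrite (derive_mx dM).
change ((\matrix_(i, j) 'D_1 (fun t0 => M t0 i j) t : 'M[R]_(p, q)) = D); apply/matrixP => i j.
by rewrite mxE derive_val.
Qed.

Lemma der_mulmx p q s (A : R -> 'M[R]_(p, q)) (B : R -> 'M[R]_(q, s)) (t : R) (dA : 'M[R]_(p, q)) (dB : 'M[R]_(q, s)) :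
  is_derive t 1 A dA -> is_derive t 1 B dB ->
  is_derive t 1 (fun x => A x *m B x) (dA *m B t + A t *m dB).
Proof.
move=> hA hB; apply: der_entries => i j.
rewrite !mxE -big_split /=.
apply: (is_derive_ext (fun x => esym (mxE _ _ _ _))) .
apply: der_sum => k; apply: derM; exact: der_entry.
Qed.

Lemma der_tr p q (A : R -> 'M[R]_(p, q)) (t : R) (dA : 'M[R]_(p, q)) :
  is_derive t 1 A dA -> is_derive t 1 (fun x => (A x)^T) dA^T.
Proof.
move=> hA; apply: der_entries => i j; rewrite mxE.
apply: (is_derive_ext (fun x => esym (mxE _ _ _ _))); exact: der_entry.
Qed.

End Der.

Section Mat.
Context {R : realType}.
Definition BndM p q (F : R -> 'M[R]_(p, q)) := forall i j, Bnd (fun t => F t i j).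
Definition Z0M p q (F : R -> 'M[R]_(p, q)) := forall i j, Z0 (fun t => F t i j).

Lemma BndM_cst p q (C : 'M[R]_(p, q)) : BndM (fun _ => C).
Proof. by move=> i j; exact: Bnd_cst. Qed.

Lemma BndM_ext p q (F G : R -> 'M[R]_(p, q)) :
  (forall t, 1 <= t -> F t = G t) -> BndM F -> BndM G.
Proof. by move=> e h i j; apply: Bnd_ext (h i j) => t t1; rewrite e. Qed.

Lemma BndM_add p q (F G : R -> 'M[R]_(p, q)) : BndM F -> BndM G -> BndM (fun t => F t + G t).
Proof. by move=> h1 h2 i j; apply: Bnd_ext (Bnd_add (h1 i j) (h2 i j)) => t _; rewrite mxE. Qed.

Lemma BndM_opp p q (F : R -> 'M[R]_(p, q)) : BndM F -> BndM (fun t => - F t).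
Proof. by move=> h1 i j; apply: Bnd_ext (Bnd_opp (h1 i j)) => t _; rewrite mxE. Qed.

Lemma BndM_sub p q (F G : R -> 'M[R]_(p, q)) : BndM F -> BndM G -> BndM (fun t => F t - G t).
Proof. by move=> h1 h2; apply: BndM_add => //; apply: BndM_opp. Qed.

Lemma BndM_mul p q s (F : R -> 'M[R]_(p, q)) (G : R -> 'M[R]_(q, s)) :
  BndM F -> BndM G -> BndM (fun t => F t *m G t).
Proof.
move=> h1 h2 i j; apply: Bnd_ext (Bnd_sum _ (fun k => Bnd_mul (h1 i k) (h2 k j))) => t _.
by rewrite mxE.
Qed.

Lemma BndM_tr p q (F : R -> 'M[R]_(p, q)) : BndM F -> BndM (fun t => (F t)^T).
Proof. by move=> h i j; apply: Bnd_ext (h j i) => t _; rewrite mxE. Qed.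

Lemma BndM_sum p q (I : Type) (s : seq I) (F : I -> R -> 'M[R]_(p, q)) :
  (forall k, BndM (F k)) -> BndM (fun t => \sum_(k <- s) F k t).
Proof.
move=> h i j; apply: Bnd_ext (Bnd_sum s (fun k => h k i j)) => t _.
by rewrite summxE.
Qed.

Lemma Z0M_ext p q (F G : R -> 'M[R]_(p, q)) :
  (forall t, 1 <= t -> F t = G t) -> Z0M F -> Z0M G.
Proof. by move=> e h i j; apply: Z0_ext (h i j) => t t1; rewrite e. Qed.

Lemma Z0M_cst0 p q : Z0M (fun _ : R => (0 : 'M[R]_(p, q))).
Proof. by move=> i j; apply: Z0_ext Z0_cst0 => t _; rewrite mxE. Qed.

Lemma Z0M_add p q (F G : R -> 'M[R]_(p, q)) : Z0M F -> Z0M G -> Z0M (fun t => F t + G t).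
Proof. by move=> h1 h2 i j; apply: Z0_ext (Z0_add (h1 i j) (h2 i j)) => t _; rewrite mxE. Qed.

Lemma Z0M_opp p q (F : R -> 'M[R]_(p, q)) : Z0M F -> Z0M (fun t => - F t).
Proof. by move=> h1 i j; apply: Z0_ext (Z0_opp (h1 i j)) => t _; rewrite mxE. Qed.

Lemma Z0M_sub p q (F G : R -> 'M[R]_(p, q)) : Z0M F -> Z0M G -> Z0M (fun t => F t - G t).
Proof. by move=> h1 h2; apply: Z0M_add => //; apply: Z0M_opp. Qed.

Lemma Z0M_mull p q s (F : R -> 'M[R]_(p, q)) (G : R -> 'M[R]_(q, s)) :
  BndM F -> Z0M G -> Z0M (fun t => F t *m G t).
Proof.
move=> h1 h2 i j; apply: Z0_ext (Z0_sum _ (fun k => Z0_mull (h1 i k) (h2 k j))) => t _.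
by rewrite mxE.
Qed.

Lemma Z0M_mulr p q s (F : R -> 'M[R]_(p, q)) (G : R -> 'M[R]_(q, s)) :
  Z0M F -> BndM G -> Z0M (fun t => F t *m G t).
Proof.
move=> h1 h2 i j; apply: Z0_ext (Z0_sum _ (fun k => Z0_mulr (h1 i k) (h2 k j))) => t _.
by rewrite mxE.
Qed.

Lemma Z0M_tr p q (F : R -> 'M[R]_(p, q)) : Z0M F -> Z0M (fun t => (F t)^T).
Proof. by move=> h i j; apply: Z0_ext (h j i) => t _; rewrite mxE. Qed.

Lemma Z0M_sum p q (I : Type) (s : seq I) (F : I -> R -> 'M[R]_(p, q)) :
  (forall k, Z0M (F k)) -> Z0M (fun t => \sum_(k <- s) F k t).
Proof.
move=> h i j; apply: Z0_ext (Z0_sum s (fun k => h k i j)) => t _.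
by rewrite summxE.
Qed.

Lemma entry_le_norm p q (M : 'M[R]_(p, q)) i j : `|M i j| <= `|M|.
Proof.
rewrite [leRHS]/Num.Def.normr /= mx_normrE.
by apply/bigmax_geP; right => /=; exists (i, j).
Qed.

Lemma Z0M_cvg p q (F : R -> 'M[R]_(p, q)) : Z0M F -> F t @[t --> +oo] --> (0 : 'M[R]_(p, q)).
Proof.
move=> h; apply/cvgrPdist_le => e e0.
have H : forall k : 'I_p * 'I_q, \forall t \near +oo, `|F t k.1 k.2| <= e.
  move=> [i j]; have [A hA] := h i j e e0.
  near=> t; apply: hA; near: t; apply: nbhs_pinfty_ge; exact: num_real.
near=> t.
rewrite sub0r normrN [leLHS]/Num.Def.normr/= mx_normrE (bigmax_le _ (ltW e0))//= => k _.
move: k; near: t; apply: filter_forall => k; exact: H.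
Unshelve. all: by end_near. Qed.

End Mat.

Section Skew.
Context {R : realType}.

Definition dot k (u v : 'cV[R]_k) : R := (u^T *m v) 0 0.

Lemma dotE k (u v : 'cV[R]_k) : dot u v = \sum_i u i 0 * v i 0.
Proof. by rewrite /dot mxE; apply: eq_bigr => i _; rewrite mxE. Qed.

Lemma sum3 (F : 'I_3 -> R) : \sum_(i < 3) F i = F (inord 0) + F (inord 1) + F (inord 2).
Proof.
rewrite !big_ord_recr big_ord0 /= add0r.
by congr (_ + _ + _); congr F; apply: val_inj; rewrite /= inordK.
Qed.

Lemma ord3 (i : 'I_3) : i = inord 0 \/ i = inord 1 \/ i = inord 2.
Proof.
case: i => [[|[|[|k]]] hk].
- by left; apply: val_inj; rewrite /= inordK.
- by right; left; apply: val_inj; rewrite /= inordK.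
- by right; right; apply: val_inj; rewrite /= inordK.
- by [].
Qed.

Lemma ord1E (j : 'I_1) : j = 0.
Proof. by rewrite ord1. Qed.

Ltac crunch := rewrite ?dotE; do 5 (rewrite ?mxE ?sum3); rewrite ?inordK //=.
Ltac cases3 i := case: (ord3 i) => [->|[->|->]].

Lemma skew_tr (x : 'cV[R]_3) : (skewS x)^T = - skewS x.
Proof.
apply/matrixP => i j; rewrite !mxE.
by cases3 i; cases3 j; rewrite ?inordK //= ?opprK ?oppr0.
Qed.

Lemma skewD (x y : 'cV[R]_3) : skewS (x + y) = skewS x + skewS y.
Proof.
apply/matrixP => i j; rewrite !mxE.
cases3 i; cases3 j; rewrite ?inordK //= ?mxE ?addr0 //; ring.
Qed.

Lemma skewN (x : 'cV[R]_3) : skewS (- x) = - skewS x.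
Proof.
apply/matrixP => i j; rewrite !mxE.
cases3 i; cases3 j; rewrite ?inordK //= ?mxE ?oppr0 //; ring.
Qed.

Lemma dot_skew_self (x u : 'cV[R]_3) : dot u (skewS x *m u) = 0.
Proof. crunch; ring. Qed.

Lemma dot_skew_swap (x b c : 'cV[R]_3) : dot b (skewS x *m c) = - dot x (skewS b *m c).
Proof. crunch; ring. Qed.

Lemma lagrange (bi bj : 'cV[R]_3) :
  dot (skewS bi *m bj) (skewS bi *m bj) = dot bi bi * dot bj bj - (dot bi bj) ^+ 2.
Proof. crunch; ring. Qed.

Lemma recon (bi bj y : 'cV[R]_3) :
  dot (skewS bi *m bj) (skewS bi *m bj) *: y =
  dot (skewS y *m bj) (skewS bi *m bj) *: bi - dot (skewS y *m bi) (skewS bi *m bj) *: bj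
  + dot (skewS y *m bi) bj *: (skewS bi *m bj).
Proof.
apply/matrixP => i j; rewrite (ord1E j); cases3 i; crunch; ring.
Qed.

End Skew.
Section DerSkew.
Context {R : realType}.
Lemma der_skew (x : R -> 'cV[R]_3) (t : R) (dx : 'cV[R]_3) :
  is_derive t 1 x dx -> is_derive t 1 (fun s => skewS (x s)) (skewS dx).
Proof.
move=> hx; apply: der_entries => i j.
apply: (is_derive_ext (fun s => esym (mxE _ _ _ _))); rewrite mxE.
case: i => [[|[|[|?]]] ?] //; case: j => [[|[|[|?]]] ?] //=;
  first [exact: derC | exact: der_entry | apply: derN; exact: der_entry].
Qed.
End DerSkew.

Section PD.
Context {R : realType}.

Lemma continuous_bigsum (T : topologicalType) (I : Type) (s : seq I) (F : I -> T -> R) :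
  (forall i, continuous (F i)) -> continuous (fun x => \sum_(i <- s) F i x).
Proof.
move=> h; elim: s => [|a s IH].
  have -> : (fun x : T => \sum_(i <- [::]) F i x) = (fun=> 0) by apply/funext => x; rewrite big_nil.
  by move=> x; exact: cst_continuous.
have -> : (fun x : T => \sum_(i <- a :: s) F i x) = (fun x => F a x + \sum_(i <- s) F i x).
  by apply/funext => x; rewrite big_cons.
by move=> x; apply: continuousD; [exact: h | exact: IH].
Qed.

Lemma posdef_lb k (P : 'M[R]_k) : sym_posdef P ->
  exists2 c, 0 < c & forall (v : 'cV[R]_k) a, c * (v a 0) ^+ 2 <= (v^T *m P *m v) 0 0.
Proof.
case: k P => [|k] P [Psym Ppos]; first by exists 1 => // v [].
pose f (w : 'rV[R]_k.+1) := (w *m P *m w^T) 0 0.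
pose A := [set w : 'rV[R]_k.+1 | `|w| = 1].
have fE w : f w = \sum_b \sum_a w 0 a * P a b * w 0 b.
  by rewrite /f mxE; apply: eq_bigr => b _; rewrite !mxE big_distrl /=.
have fc : continuous f.
  have -> : f = (fun w => \sum_b \sum_a w 0 a * P a b * w 0 b) by apply/funext => w; rewrite fE.
  apply: continuous_bigsum => b; apply: continuous_bigsum => a w.
  have h1 : {for w, continuous (fun x : 'rV[R]_k.+1 => x 0 a)} := @coord_continuous _ _ _ 0 a w.
  have h2 : {for w, continuous (fun x : 'rV[R]_k.+1 => x 0 b)} := @coord_continuous _ _ _ 0 b w.
  have h3 : {for w, continuous (fun x : 'rV[R]_k.+1 => P a b)} by move=> ? ; exact: cst_continuous.
  exact: (continuousM (continuousM h1 h3) h2).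
have A0 : A !=set0.
  pose w1 := const_mx 1 : 'rV[R]_k.+1.
  have w10 : `|w1| != 0.
    rewrite normr_eq0; apply/eqP => /matrixP /(_ 0 0); rewrite !mxE => /eqP.
    by rewrite oner_eq0.
  exists (`|w1|^-1 *: w1); rewrite /A /= normrZ normfV normr_id mulVf //.
have Ac : compact A.
  apply: bounded_closed_compact.
    rewrite /= /bounded_near; near=> M => w /= ->.
    near: M; apply: nbhs_pinfty_ge; exact: num_real.
  rewrite (_ : A = normr @^-1` [set 1]); last by [].
  apply: preimage_closed; last exact: closed_eq.
  move=> w _; exact: norm_continuous.
have [wm wmA wmin] := EVT_min_rV A0 Ac (continuous_subspaceT fc).
have wm0 : wm^T != 0.
  apply/eqP => /(congr1 trmx); rewrite trmxK trmx0 => E.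
  by move: wmA; rewrite inE /A /= E normr0 => /eqP; rewrite eq_sym oner_eq0.
have c0 : 0 < f wm by have := Ppos _ wm0; rewrite trmxK.
exists (f wm) => // v a.
have [->|v0] := eqVneq v 0.
  by rewrite mxE mulmx0 mxE expr0n /= mulr0.
set w := v^T.
have n0 : 0 < `|w|.
  rewrite normr_gt0; apply/eqP => /(congr1 trmx); rewrite trmxK trmx0.
  by apply/eqP.
have wA : (`|w|^-1 *: w) \in A.
  by rewrite inE /A /= normrZ normfV normr_id mulVf // gt_eqF.
have := wmin _ wA.
have -> : f (`|w|^-1 *: w) = `|w|^-2 * f w.
  rewrite /f (_ : (`|w|^-1 *: w)^T = `|w|^-1 *: w^T); last by apply/matrixP => i j; rewrite !mxE.
  by rewrite -!scalemxAl -scalemxAr !mxE mulrA -expr2 exprVn.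
move=> H.
have H2 : `|w|^+2 * f wm <= f w.
  have := ler_wpM2l (exprn_ge0 2 (ltW n0)) H; rewrite mulrA mulfV ?mul1r //.
  by rewrite expf_neq0 // gt_eqF.
have -> : (v^T *m P *m v) 0 0 = f w by rewrite /f /w trmxK.
apply: le_trans H2; rewrite mulrC; apply: ler_wpM2r; first exact: ltW c0.
have -> : v a 0 = w 0 a by rewrite mxE.
by rewrite -real_normK ?num_real // lerXn2r ?nnegrE // entry_le_norm.
Unshelve. all: by end_near. Qed.

End PD.

Section Filt.
Context {R : realType}.

Lemma hurwitz_last n (g : nat -> R) : (1 <= n)%N -> hurwitz (charpoly_of n g) -> g n != 0.
Proof.
move=> n1 H; apply/negP => /eqP g0.
have p0 : (charpoly_of n g).[0] = 0.
  rewrite /charpoly_of hornerD hornerXn expr0n /= gtn_eqF // add0r horner_sum.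
  rewrite big_nat_recr //= big1_seq ?add0r.
    by rewrite hornerM hornerC hornerXn subnn expr0 mulr1 g0.
  move=> k /andP[_]; rewrite mem_iota => /andP[k1 kn].
  rewrite hornerM hornerC hornerXn expr0n subn_eq0.
  have -> : (n <= k)%N = false by apply/negbTE; rewrite -ltnNge; lia.
  by rewrite mulr0.
have := H 0; rewrite /root horner_coef0 coef_map_id0 //.
rewrite -horner_coef0 p0 /= eqxx => /(_ isT); by rewrite lt_irreflexive.
Qed.


Lemma kron_idx_bij p q : bijective (@kron_idx p q).
Proof.
exists (fun z => cast_ord (mxvec_cast p q) (enum_rank z)) => r /=.
  by rewrite /kron_idx enum_valK cast_ordKV.
by rewrite /kron_idx cast_ordK enum_rankK.
Qed.

Lemma kron_idx_inj p q : injective (@kron_idx p q).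
Proof. exact: bij_inj (kron_idx_bij p q). Qed.

Lemma sum_kron p q (G : 'I_p * 'I_q -> R) :
  \sum_(r < p * q) G (kron_idx r) = \sum_x \sum_y G (x, y).
Proof.
rewrite pair_big /=; symmetry.
rewrite (reindex (@kron_idx p q)) /=; last exact/onW_bij/kron_idx_bij.
by apply: eq_bigr => r _; rewrite -surjective_pairing.
Qed.

Lemma BpTBp n (g : nat -> R) : (1 <= n.-1)%N ->
  (Bp n g)^T *m Bp n g = (g n) ^+ 2 *: 1%:M.
Proof.
move=> p1; apply/matrixP => a b.
set p := n.-1.
pose G (a2 b2 : 'I_3) (z : 'I_p * 'I_3) :=
  (g n * ((if z.1 == p.-1 :> nat then 1 else 0) * (z.2 == a2)%:R)) * (g n * ((if z.1 == p.-1 :> nat then 1 else 0) * (z.2 == b2)%:R)).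
rewrite mxE (eq_bigr (fun r => G (@kron_idx 1 3 a).2 (@kron_idx 1 3 b).2 (@kron_idx p 3 r))); last first.
  by move=> r _; rewrite !mxE.
have hp : (p.-1 < p)%N by rewrite /p; lia.
rewrite (sum_kron (G _ _)) (bigD1 (Ordinal hp)) //= [X in _ + X]big1 ?addr0; last first.
  move=> x /eqP xne; apply: big1 => y _; rewrite /G /=.
  have -> : (x == p.-1 :> nat) = false.
    by apply/negbTE/eqP => E; apply: xne; apply: val_inj.
  by rewrite !mul0r !mulr0.
rewrite /G /= eqxx.
rewrite (bigD1 (@kron_idx 1 3 a).2) //= eqxx [X in _ + X]big1 ?addr0; last first.
  by move=> y /negbTE ->; rewrite !mulr0 mul0r.
rewrite !mxE !mul1r.
have [ab|ab] := eqVneq a b.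
  by rewrite ab eqxx /= ?mulr1n !mulr1 expr2.
case: eqP => E; last by rewrite /= ?mulr0n !mulr0.
exfalso; move/eqP: ab; apply; apply/eqP.
have H : @kron_idx 1 3 a = @kron_idx 1 3 b.
  by rewrite [@kron_idx 1 3 a]surjective_pairing [@kron_idx 1 3 b]surjective_pairing E !ord1.
by apply/eqP; exact: (kron_idx_inj H).
Qed.

End Filt.

Section Dot.
Context {R : realType}.
Implicit Types (k : nat).

Lemma dotDl k (u v w : 'cV[R]_k) : dot (u + v) w = dot u w + dot v w.
Proof. by rewrite /dot linearD /= mulmxDl mxE. Qed.
Lemma dotDr k (u v w : 'cV[R]_k) : dot u (v + w) = dot u v + dot u w.
Proof. by rewrite /dot mulmxDr mxE. Qed.
Lemma dotNl k (u w : 'cV[R]_k) : dot (- u) w = - dot u w.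
Proof. by rewrite /dot linearN /= mulNmx mxE. Qed.
Lemma dotNr k (u w : 'cV[R]_k) : dot u (- w) = - dot u w.
Proof. by rewrite /dot mulmxN mxE. Qed.
Lemma dotBl k (u v w : 'cV[R]_k) : dot (u - v) w = dot u w - dot v w.
Proof. by rewrite dotDl dotNl. Qed.
Lemma dotBr k (u v w : 'cV[R]_k) : dot u (v - w) = dot u v - dot u w.
Proof. by rewrite dotDr dotNr. Qed.
Lemma dotC k (u v : 'cV[R]_k) : dot u v = dot v u.
Proof. by rewrite !dotE; apply: eq_bigr => i _; rewrite mulrC. Qed.
Lemma dot_mul k l (u : 'cV[R]_k) (M : 'M[R]_(k, l)) (v : 'cV[R]_l) :
  dot u (M *m v) = dot (M^T *m u) v.
Proof. by rewrite /dot trmx_mul trmxK mulmxA. Qed.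
Lemma dot0r k (u : 'cV[R]_k) : dot u 0 = 0.
Proof. by rewrite /dot mulmx0 mxE. Qed.
Lemma dotZr k (u v : 'cV[R]_k) c : dot u (c *: v) = c * dot u v.
Proof. by rewrite /dot -scalemxAr mxE. Qed.

Lemma dot_self_ge0 k (v : 'cV[R]_k) : 0 <= dot v v.
Proof. by rewrite dotE sumr_ge0 // => i _; rewrite -expr2 sqr_ge0. Qed.

Lemma sq_le_dot k (v : 'cV[R]_k) a : (v a 0) ^+ 2 <= dot v v.
Proof.
rewrite dotE (bigD1 a) //= -expr2 lerDl; apply: sumr_ge0 => i _; by rewrite -expr2 sqr_ge0.
Qed.

Lemma dot_self_gt0 k (v : 'cV[R]_k) : v != 0 -> 0 < dot v v.
Proof.
move=> v0; rewrite lt_def dot_self_ge0 andbT; apply: contra v0 => /eqP H.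
apply/eqP/matrixP => i j; rewrite (ord1E j) mxE; apply/eqP.
by rewrite -sqrf_eq0 eq_le sqr_ge0 andbT -H sq_le_dot.
Qed.

Lemma quad_ge0 k (P : 'M[R]_k) (v : 'cV[R]_k) : sym_posdef P -> 0 <= dot v (P *m v).
Proof.
move=> [_ hP]; have [->|v0] := eqVneq v 0; first by rewrite mulmx0 dot0r.
by apply: ltW; have := hP v v0; rewrite /dot mulmxA.
Qed.

Lemma sq_bnd (x K : R) : x ^+ 2 <= K -> `|x| <= 1 + K.
Proof.
move=> h; case: (leP `|x| 1) => x1; first by rewrite (le_trans x1) // lerDl (le_trans _ h) // sqr_ge0.
rewrite -real_normK ?num_real // in h; nra.
Qed.

Lemma Bnd_sq (f : R -> R) K : (forall t, 1 <= t -> (f t) ^+ 2 <= K) -> Bnd f.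
Proof. by move=> h; exists (1 + K) => t t1; apply: sq_bnd; apply: h. Qed.

Lemma Z0_sq (f g : R -> R) : (forall t, 1 <= t -> (f t) ^+ 2 <= g t) -> Z0 g -> Z0 f.
Proof.
move=> h hg e e0; have [A hA] := hg (e ^+ 2) (exprn_gt0 2 e0).
exists (maxr A 1) => t; rewrite ge_max => /andP[tA t1].
have H : `|f t| ^+ 2 <= e ^+ 2.
  rewrite real_normK ?num_real //; apply: le_trans (h t t1) _.
  exact: le_trans (ler_norm _) (hA t tA).
have := normr_ge0 (f t); nra.
Qed.

End Dot.

Section More.
Context {R : realType}.

Lemma der_dot k (u v : R -> 'cV[R]_k) (t : R) (du dv : 'cV[R]_k) :
  is_derive t 1 u du -> is_derive t 1 v dv ->
  is_derive t 1 (fun s => dot (u s) (v s)) (dot du (v t) + dot (u t) dv).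
Proof.
move=> hu hv; have := der_entry 0 0 (der_mulmx (der_tr hu) hv).
by rewrite mxE.
Qed.

Lemma der_mulC p q (M : 'M[R]_(p, q)) (v : R -> 'cV[R]_q) (t : R) (dv : 'cV[R]_q) :
  is_derive t 1 v dv -> is_derive t 1 (fun s => M *m v s) (M *m dv).
Proof.
move=> hv; have := der_mulmx (derC M t) hv; by rewrite mul0mx add0r.
Qed.

Lemma Bnd_dot k (u v : R -> 'cV[R]_k) : BndM u -> BndM v -> Bnd (fun t => dot (u t) (v t)).
Proof. by move=> hu hv; exact: (BndM_mul (BndM_tr hu) hv 0 0). Qed.

Lemma Z0_dot k (u v : R -> 'cV[R]_k) : Z0M u -> BndM v -> Z0 (fun t => dot (u t) (v t)).
Proof. by move=> hu hv; exact: (Z0M_mulr (Z0M_tr hu) hv 0 0). Qed.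

Lemma Z0_dotr k (u v : R -> 'cV[R]_k) : BndM u -> Z0M v -> Z0 (fun t => dot (u t) (v t)).
Proof. by move=> hu hv; exact: (Z0M_mull (BndM_tr hu) hv 0 0). Qed.

Lemma BndM_skew (x : R -> 'cV[R]_3) : BndM x -> BndM (fun t => skewS (x t)).
Proof.
move=> hx i j; apply: Bnd_ext (fun t _ => esym (mxE _ _ _ _)) _.
case: i => [[|[|[|?]]] ?] //; case: j => [[|[|[|?]]] ?] //=;
  first [exact: Bnd_cst | exact: hx | apply: Bnd_opp; exact: hx].
Qed.

Lemma Z0M_scale p q (s : R -> R) (v : R -> 'M[R]_(p, q)) : Z0 s -> BndM v -> Z0M (fun t => s t *: v t).
Proof. by move=> hs hv i j; apply: Z0_ext (Z0_mulr hs (hv i j)) => t _; rewrite mxE. Qed.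

Lemma BndM_scale p q (s : R -> R) (v : R -> 'M[R]_(p, q)) : Bnd s -> BndM v -> BndM (fun t => s t *: v t).
Proof. by move=> hs hv i j; apply: Bnd_ext (Bnd_mul hs (hv i j)) => t _; rewrite mxE. Qed.

Lemma Z0M_cV_entry k (v : R -> 'cV[R]_k) : (forall a, Z0 (fun t => v t a 0)) -> Z0M v.
Proof. by move=> h i j; rewrite (ord1E j); exact: h. Qed.

Lemma term_le_sum (I : finType) (F : I -> R) i : (forall j, 0 <= F j) -> F i <= \sum_j F j.
Proof. by move=> h; rewrite (bigD1 i) //= lerDl sumr_ge0. Qed.

End More.

Section Keys.
Context {R : realType}.

Lemma dot_mull k l (M : 'M[R]_(l, k)) (u : 'cV[R]_k) (v : 'cV[R]_l) :
  dot (M *m u) v = dot u (M^T *m v).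
Proof. by rewrite /dot trmx_mul mulmxA. Qed.

Lemma dot_sumr k (I : Type) (s : seq I) (u : 'cV[R]_k) (F : I -> 'cV[R]_k) :
  dot u (\sum_(i <- s) F i) = \sum_(i <- s) dot u (F i).
Proof.
elim: s => [|a s IH]; first by rewrite !big_nil dot0r.
by rewrite !big_cons dotDr IH.
Qed.

Lemma key1 k (A P Q : 'M[R]_k) (B : 'M[R]_(k, 3)) (X : 'cV[R]_k) (e bh om et : 'cV[R]_3) :
  A^T *m P + P *m A = - Q -> P^T = P ->
  dot (A *m X + B *m e) (P *m X) + dot X (P *m (A *m X + B *m e))
  + (dot (- (skewS om *m e) + skewS et *m bh - B^T *m P *m X) e
     + dot e (- (skewS om *m e) + skewS et *m bh - B^T *m P *m X))
  = - dot X (Q *m X) + 2 * dot e (skewS et *m bh).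
Proof.
move=> hL hP.
rewrite [dot (- _ + _ - _) e]dotC.
rewrite !dotDl !dotDr ?dotNr ?dotNl dot_skew_self ?oppr0 ?add0r.
rewrite !dot_mull mulmxDr !dotDr.
have E1 : dot X (A^T *m (P *m X)) + dot X (P *m (A *m X)) = - dot X (Q *m X).
  by rewrite -dotDr !mulmxA -mulmxDl hL mulNmx dotNr.
have E2 : dot X (P *m (B *m e)) = dot e (B^T *m P *m X).
  by rewrite mulmxA dot_mul trmx_mul hP dotC.
have E3 : dot e (B^T *m (P *m X)) = dot e (B^T *m P *m X) by rewrite mulmxA.
rewrite E2 E3; move: E1; set a1 := dot X (A^T *m (P *m X)); set a2 := dot X (P *m (A *m X)).
move=> E1.
have -> : a1 + dot e (B^T *m P *m X) + (a2 + dot e (B^T *m P *m X)) =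
  (a1 + a2) + 2 * dot e (B^T *m P *m X) by ring.
rewrite E1; ring.
Qed.

Lemma key2 (Gam Gi : 'M[R]_3) (s et : 'cV[R]_3) :
  Gi *m Gam = 1%:M -> Gi^T = Gi ->
  dot (Gam *m s) (Gi *m et) + dot et (Gi *m (Gam *m s)) = 2 * dot et s.
Proof.
move=> h1 h2.
rewrite dotC dot_mull h2 !mulmxA h1 !mul1mx; ring.
Qed.

Lemma key3 (b bh et : 'cV[R]_3) :
  dot (b - bh) (skewS et *m bh) = - dot et (skewS b *m bh).
Proof. by rewrite dotBl dot_skew_self subr0 dot_skew_swap. Qed.

End Keys.

Unset Implicit Arguments.

Theorem proposition2 (R : realType) (n m : nat) (hn : (2 <= n)%N)
  (gamma : 'I_m -> nat -> R)
  (hH1 : forall i, hurwitz (charpoly_of n (gamma i)))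
  (hH2 : forall i, hurwitz (charpoly_of n.-1 (gamma i)))
  (Q P : 'I_m -> 'M[R]_(n.-1 * 3))
  (hQ : forall i, sym_posdef (Q i)) (hP : forall i, sym_posdef (P i))
  (hLyap : forall i, (Ap n (gamma i))^T *m P i + P i *m Ap n (gamma i) = - Q i)
  (Gam : 'M[R]_3) (hG : posdef_diag Gam)
  (r : 'I_m -> 'cV[R]_3) (Rot : R -> 'M[R]_3) (om : R -> 'cV[R]_3) (eta : 'cV[R]_3)
  (hSO : forall t : R, 0 <= t -> in_SO3 (Rot t))
  (hRot : forall t : R, 0 < t -> is_derive t (1 : R) Rot (Rot t *m skewS (om t)))
  (hom : exists M : R, forall t : R, 0 <= t -> `|om t| <= M)
  (hnc : exists i j : 'I_m, forall t : R, 0 <= t ->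
           skewS ((Rot t)^T *m r i) *m ((Rot t)^T *m r j) != 0)
  (X : 'I_m -> R -> 'cV[R]_(n.-1 * 3))
  (bh : 'I_m -> R -> 'cV[R]_3) (etah : R -> 'cV[R]_3)
  (hX : forall i (t : R), 0 < t ->
     is_derive t (1 : R) (X i)
       (Ap n (gamma i) *m X i t + Bp n (gamma i) *m ((Rot t)^T *m r i - bh i t)))
  (hbh : forall i (t : R), 0 < t ->
     is_derive t (1 : R) (bh i)
       (- (skewS (om t + eta - etah t) *m bh i t)
        + (Bp n (gamma i))^T *m P i *m X i t))
  (hetah : forall t : R, 0 < t ->
     is_derive t (1 : R) etah
       (- (Gam *m \sum_(i < m) skewS ((Rot t)^T *m r i) *m bh i t))) :
  (forall i, ((Rot t)^T *m r i - bh i t) @[t --> +oo] --> (0 : 'cV[R]_3))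
  /\ (eta - etah t) @[t --> +oo] --> (0 : 'cV[R]_3).
Proof.
have n1 : (1 <= n.-1)%N by lia.
have [d [dpos Gd]] := hG.
pose Gi : 'M[R]_3 := diag_mx (\row_k (d 0 k)^-1).
have GiG : Gi *m Gam = 1%:M.
  rewrite Gd mulmx_diag; apply/matrixP => i j; rewrite !mxE.
  by case: (i == j); rewrite ?mulr1n ?mulr0n // mulVf // gt_eqF.
have GiT : Gi^T = Gi by rewrite tr_diag_mx.
pose b (i : 'I_m) (t : R) := (Rot t)^T *m r i.
pose e (i : 'I_m) (t : R) := b i t - bh i t.
pose et (t : R) := eta - etah t.
pose A (i : 'I_m) := Ap n (gamma i).
pose B (i : 'I_m) := Bp n (gamma i).
pose de (i : 'I_m) (t : R) := - (skewS (om t) *m e i t) + skewS (et t) *m bh i t - (B i)^T *m P i *m X i t.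
pose dbh (i : 'I_m) (t : R) := - (skewS (om t + eta - etah t) *m bh i t) + (B i)^T *m P i *m X i t.
pose dX (i : 'I_m) (t : R) := A i *m X i t + B i *m e i t.
pose det (t : R) := Gam *m \sum_(i < m) skewS (b i t) *m bh i t.
have db : forall i (t : R), 0 < t -> is_derive t 1 (b i) (- (skewS (om t) *m b i t)).
  move=> i t t0; apply: (is_derive_eq (der_mulmx (der_tr (hRot t t0)) (derC (r i) t))).
  by rewrite mulmx0 addr0 trmx_mul skew_tr !mulNmx -mulmxA.
have de_ : forall i (t : R), 0 < t -> is_derive t 1 (e i) (de i t).
  move=> i t t0; apply: (is_derive_eq (derB (db i t t0) (hbh i t t0))).
  by rewrite /de /e /et -addrA (skewD (om t) (eta - etah t)) mulmxDl mulmxBr !opprD !opprK !addrA.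
have det_ : forall t : R, 0 < t -> is_derive t 1 et (det t).
  move=> t t0; apply: (is_derive_eq (derB (derC eta t) (hetah t t0))).
  by rewrite sub0r opprK.
pose V (t : R) := \sum_(i < m) (dot (X i t) (P i *m X i t) + dot (e i t) (e i t)) + dot (et t) (Gi *m et t).
pose W (t : R) := \sum_(i < m) dot (X i t) (Q i *m X i t).
pose c (i : 'I_m) (t : R) := dot (e i t) (skewS (et t) *m bh i t).
have dV : forall t : R, 0 < t -> is_derive t 1 V (- W t).
  move=> t t0.
  have H := derD (der_sum (index_enum 'I_m) (fun i => derD (der_dot (hX i t t0) (der_mulC (P i) (hX i t t0))) (der_dot (de_ i t t0) (de_ i t t0)))) (der_dot (det_ t t0) (der_mulC Gi (det_ t t0))).
  apply: (is_derive_eq H).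
  have S1 : \sum_(i < m) (dot (A i *m X i t + B i *m e i t) (P i *m X i t) + dot (X i t) (P i *m (A i *m X i t + B i *m e i t))
      + (dot (de i t) (e i t) + dot (e i t) (de i t))) = - W t + 2 * \sum_(i < m) c i t.
    rewrite (eq_bigr (fun i => - dot (X i t) (Q i *m X i t) + 2 * c i t)); last first.
      by move=> i _; apply: key1; [exact: hLyap | exact: (hP i).1].
    by rewrite big_split /= -big_distrr /= sumrN.
  have S2 : \sum_(i < m) c i t = - \sum_(i < m) dot (et t) (skewS (b i t) *m bh i t).
    rewrite -sumrN; apply: eq_bigr => i _; exact: key3.
  have K2 : dot (det t) (Gi *m et t) + dot (et t) (Gi *m det t) = 2 * dot (et t) (\sum_(i < m) skewS (b i t) *m bh i t).
    exact: key2.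
  rewrite S1 K2 dot_sumr S2; ring.
have hW0 : forall t, 0 <= W t.
  by move=> t; apply: sumr_ge0 => i _; apply: quad_ge0.
have dotGiE : forall v : 'cV[R]_3, dot v (Gi *m v) = \sum_k (d 0 k)^-1 * (v k 0) ^+ 2.
  move=> v; rewrite dotE; apply: eq_bigr => k _.
  by rewrite mul_diag_mx mxE mxE mulrCA expr2.
have Gi0 : forall v : 'cV[R]_3, 0 <= dot v (Gi *m v).
  move=> v; rewrite dotGiE; apply: sumr_ge0 => k _.
  by rewrite mulr_ge0 ?sqr_ge0 // invr_ge0 ltW.
have Gib : forall (v : 'cV[R]_3) k, (v k 0) ^+ 2 <= d 0 k * dot v (Gi *m v).
  move=> v k; have dk : 0 < (d 0 k)^-1 by rewrite invr_gt0.
  rewrite dotGiE -(ler_pM2l dk) [X in _ <= X]mulrA mulVf ?gt_eqF // mul1r -?mulrA -?expr2.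
  apply: (@term_le_sum R _ (fun j => (d 0 j)^-1 * v j 0 ^+ 2) k) => j.
  by rewrite mulr_ge0 ?sqr_ge0 // invr_ge0 ltW.
have hTs : forall t, 0 <= \sum_(i < m) (dot (X i t) (P i *m X i t) + dot (e i t) (e i t)).
  by move=> t; apply: sumr_ge0 => i _; rewrite addr_ge0 ?quad_ge0 ?dot_self_ge0.
have hT12 : forall i t, dot (X i t) (P i *m X i t) + dot (e i t) (e i t) <= V t.
  move=> i t; apply: (@le_trans _ _ (\sum_(j < m) (dot (X j t) (P j *m X j t) + dot (e j t) (e j t)))).
    apply: (@term_le_sum R _ (fun j => dot (X j t) (P j *m X j t) + dot (e j t) (e j t)) i) => j.
    by rewrite addr_ge0 ?quad_ge0 ?dot_self_ge0.
  by rewrite /V lerDl Gi0.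
have hT1 : forall i t, dot (X i t) (P i *m X i t) <= V t.
  by move=> i t; apply: le_trans (hT12 i t); rewrite lerDl dot_self_ge0.
have hT2 : forall i t, dot (e i t) (e i t) <= V t.
  by move=> i t; apply: le_trans (hT12 i t); rewrite lerDr quad_ge0.
have hT3 : forall t, dot (et t) (Gi *m et t) <= V t.
  by move=> t; rewrite /V lerDr.
have hVdec : forall s t : R, 1 <= s -> s <= t -> V t <= V s.
  move=> s t s1 st; have s0 : 0 < s by exact: lt_le_trans ltr01 s1.
  have [c0 _ E] := mvt0 s0 st dV.
  by rewrite -subr_le0 E mulNr oppr_le0; apply: mulr_ge0; rewrite ?subr_ge0.
have hV1 : forall t, 1 <= t -> V t <= V 1 by move=> t t1; apply: hVdec.
have bX : forall i, BndM (X i).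
  move=> i; have [cP cP0 hcP] := posdef_lb (hP i).
  move=> a j; rewrite (ord1E j); apply: (@Bnd_sq R _ (V 1 / cP)) => t t1.
  have h1 : cP * (X i t a 0) ^+ 2 <= dot (X i t) (P i *m X i t) by rewrite /dot mulmxA; apply: hcP.
  rewrite ler_pdivlMr // mulrC; apply: le_trans h1 _.
  exact: le_trans (hT1 i t) (hV1 t t1).
have be : forall i, BndM (e i).
  move=> i a j; rewrite (ord1E j); apply: (@Bnd_sq R _ (V 1)) => t t1.
  exact: le_trans (sq_le_dot _ a) (le_trans (hT2 i t) (hV1 t t1)).
have bet : BndM et.
  move=> a j; rewrite (ord1E j); apply: (@Bnd_sq R _ (d 0 a * V 1)) => t t1.
  apply: le_trans (Gib _ a) _; rewrite ler_pM2l //.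
  exact: le_trans (hT3 t) (hV1 t t1).
have hbb : forall i j (t : R), 0 <= t -> dot (b i t) (b j t) = dot (r i) (r j).
  move=> i j t t0; have [h1 _] := hSO t t0.
  have h2 := mulmx1C h1.
  by rewrite /b dot_mull trmxK mulmxA h2 mul1mx.
have bb : forall i, BndM (b i).
  move=> i a j; rewrite (ord1E j); apply: (@Bnd_sq R _ (dot (r i) (r i))) => t t1.
  rewrite -(hbb i i t) ?(le_trans ler01 t1) //; exact: sq_le_dot.
have bbh : forall i, BndM (bh i).
  move=> i; apply: BndM_ext (BndM_sub (bb i) (be i)) => t _.
  by rewrite /e opprB addrC subrK.
have bom : BndM om.
  have [M hM] := hom; move=> a j; exists M => t t1.
  exact: le_trans (entry_le_norm _ _ _) (hM t (le_trans ler01 t1)).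
have bSom : BndM (fun t => skewS (om t)) := BndM_skew bom.
have bSet : BndM (fun t => skewS (et t)) := BndM_skew bet.
have betah : BndM etah.
  apply: BndM_ext (BndM_sub (BndM_cst eta) bet) => t _.
  by rewrite /et opprB addrC subrK.
have bdX : forall i, BndM (dX i) := fun i =>
  BndM_add (BndM_mul (BndM_cst (A i)) (bX i)) (BndM_mul (BndM_cst (B i)) (be i)).
have bde : forall i, BndM (de i) := fun i =>
  BndM_sub (BndM_add (BndM_opp (BndM_mul bSom (be i))) (BndM_mul bSet (bbh i)))
    (BndM_mul (BndM_cst ((B i)^T *m P i)) (bX i)).
have bdbh : forall i, BndM (dbh i) := fun i =>
  BndM_add (BndM_opp (BndM_mul (BndM_skew (BndM_sub (BndM_add bom (BndM_cst eta)) betah)) (bbh i)))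
    (BndM_mul (BndM_cst ((B i)^T *m P i)) (bX i)).
have bdet : BndM det :=
  BndM_mul (BndM_cst Gam) (BndM_sum _ (fun i => BndM_mul (BndM_skew (bb i)) (bbh i))).
pose dW (t : R) := \sum_(i < m) (dot (dX i t) (Q i *m X i t) + dot (X i t) (Q i *m dX i t)).
have dW_ : forall t : R, 0 < t -> is_derive t 1 W (dW t) := fun t t0 =>
  der_sum _ (fun i => der_dot (hX i t t0) (der_mulC (Q i) (hX i t t0))).
have bdW : Bnd dW := Bnd_sum _ (fun i => Bnd_add (Bnd_dot (bdX i) (BndM_mul (BndM_cst (Q i)) (bX i)))
  (Bnd_dot (bX i) (BndM_mul (BndM_cst (Q i)) (bdX i)))).
have [KW hKW] := bdW.
have lipW : forall s t : R, 1 <= s -> 1 <= t -> `|(- W s) - (- W t)| <= KW * `|s - t|.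
  move=> s t s1 t1; rewrite opprK addrC [`|s - t|]distrC.
  have HH := lip_of_der dW_ hKW; exact: HH.
have hV0 : forall t, 1 <= t -> 0 <= V t by move=> t _; rewrite addr_ge0 ?hTs ?Gi0.
have CV : Cauchy V := Cauchy_nincr hVdec hV0.
have ZW' := @barbalat R V (fun t => - W t) (fun t => - W t) (fun _ => 0) KW dV (fun t _ => esym (addr0 _)) CV Z0_cst0 lipW.
have ZW : Z0 W := Z0_ext (fun t _ => opprK (W t)) (Z0_opp ZW').
have ZX : forall i, Z0M (X i).
  move=> i; have [cQ cQ0 hcQ] := posdef_lb (hQ i).
  apply: Z0M_cV_entry => a; apply: (@Z0_sq R _ (fun t => W t / cQ)); last exact: Z0_mulr ZW (Bnd_cst _).
  move=> t t1; rewrite ler_pdivlMr // mulrC.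
  have h1 : cQ * (X i t a 0) ^+ 2 <= dot (X i t) (Q i *m X i t) by rewrite /dot mulmxA; apply: hcQ.
  apply: le_trans h1 _.
  apply: (@term_le_sum R _ (fun j => dot (X j t) (Q j *m X j t)) i) => j; exact: quad_ge0.
have ZdX : forall i, Z0M (dX i).
  move=> i; apply: Z0M_cV_entry => a.
  pose ddX (t : R) := A i *m dX i t + B i *m de i t.
  have hdd : forall t : R, 0 < t -> is_derive t 1 (fun s => dX i s a 0) (ddX t a 0).
    move=> t t0; apply: der_entry; exact: derD (der_mulC (A i) (hX i t t0)) (der_mulC (B i) (de_ i t t0)).
  have [K hK] : Bnd (fun t => ddX t a 0) := BndM_add (BndM_mul (BndM_cst _) (bdX i)) (BndM_mul (BndM_cst _) (bde i)) a 0.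
  have lip := lip_of_der hdd hK.
  apply: (@barbalat R (fun t => X i t a 0) (fun t => dX i t a 0) (fun t => dX i t a 0) (fun _ => 0) K).
  - move=> t t0; apply: der_entry; exact: hX i t t0.
  - by move=> t _; rewrite addr0.
  - exact: Z0_Cauchy (ZX i a 0).
  - exact: Z0_cst0.
  - exact: lip.
have ZBe : forall i, Z0M (fun t => B i *m e i t).
  move=> i; apply: Z0M_ext (Z0M_sub (ZdX i) (Z0M_mull (BndM_cst (A i)) (ZX i))) => t _.
  by rewrite /dX addrAC subrr add0r.
have gne : forall i, gamma i n != 0.
  by move=> i; apply: hurwitz_last (hH1 i); lia.
have Ze : forall i, Z0M (e i).
  move=> i; pose k := ((gamma i n) ^+ 2)^-1.
  apply: Z0M_ext (Z0M_mull (BndM_cst (k *: (B i)^T)) (ZBe i)) => t _.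
  by rewrite mulmxA -scalemxAl /B BpTBp // scalerA mulVf ?expf_neq0 // scale1r mul1mx.
have ZSb : forall i, Z0M (fun t => skewS (et t) *m bh i t).
  move=> i; apply: Z0M_cV_entry => a.
  pose h (t : R) := skewS (et t) *m bh i t.
  pose dh (t : R) := skewS (det t) *m bh i t + skewS (et t) *m dbh i t.
  have hdh : forall t : R, 0 < t -> is_derive t 1 (fun s => h s a 0) (dh t a 0).
    move=> t t0; apply: der_entry; exact: der_mulmx (der_skew (det_ t t0)) (hbh i t t0).
  have [K hK] : Bnd (fun t => dh t a 0) :=
    BndM_add (BndM_mul (BndM_skew bdet) (bbh i)) (BndM_mul bSet (bdbh i)) a 0.
  have lip := lip_of_der hdh hK.
  pose u (t : R) := - (skewS (om t) *m e i t) - (B i)^T *m P i *m X i t.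
  have Zu : Z0M u := Z0M_sub (Z0M_opp (Z0M_mull bSom (Ze i))) (Z0M_mull (BndM_cst _) (ZX i)).
  apply: (@barbalat R (fun t => e i t a 0) (fun t => de i t a 0) (fun t => h t a 0) (fun t => u t a 0) K).
  - move=> t t0; apply: der_entry; exact: de_ i t t0.
  - move=> t _; rewrite /de /h /u !mxE; ring.
  - exact: Z0_Cauchy (Ze i a 0).
  - exact: Zu a 0.
  - exact: lip.
have ZSbb : forall i, Z0M (fun t => skewS (et t) *m b i t).
  move=> i; apply: Z0M_ext (Z0M_add (ZSb i) (Z0M_mull bSet (Ze i))) => t _.
  by rewrite -mulmxDr /e addrC subrK.
have [i0 [j0 hij]] := hnc.
pose cc (t : R) := skewS (b i0 t) *m b j0 t.
pose kap := dot (r i0) (r i0) * dot (r j0) (r j0) - (dot (r i0) (r j0)) ^+ 2.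
have hk : forall t : R, 0 <= t -> dot (cc t) (cc t) = kap.
  by move=> t t0; rewrite /cc lagrange (hbb i0 i0 t t0) (hbb j0 j0 t t0) (hbb i0 j0 t t0).
have kap0 : 0 < kap by rewrite -(hk 0) ?lexx //; apply: dot_self_gt0; exact: hij 0 (lexx 0).
have Zet : Z0M et.
  pose rhs (t : R) := dot (skewS (et t) *m b j0 t) (cc t) *: b i0 t
    - dot (skewS (et t) *m b i0 t) (cc t) *: b j0 t + dot (skewS (et t) *m b i0 t) (b j0 t) *: cc t.
  have bcc : BndM cc := BndM_mul (BndM_skew (bb i0)) (bb j0).
  have Zr : Z0M rhs := Z0M_add (Z0M_sub (Z0M_scale (Z0_dot (ZSbb j0) bcc) (bb i0))
    (Z0M_scale (Z0_dot (ZSbb i0) bcc) (bb j0))) (Z0M_scale (Z0_dot (ZSbb i0) (bb j0)) bcc).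
  apply: Z0M_ext (Z0M_mull (BndM_cst (kap^-1%:M)) Zr) => t t1.
  have E := recon (b i0 t) (b j0 t) (et t).
  rewrite mul_scalar_mx /rhs /cc -E.
  by rewrite (hk t) ?(le_trans ler01 t1) // scalerA mulVf ?gt_eqF // scale1r.
split.
  move=> i; exact: Z0M_cvg (Ze i).
exact: Z0M_cvg Zet.
Qed.
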